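(* Consider a $k$-armed Bernoulli bandit in which the reward of arm $a\in\{1,\dots,k\}$ is distributed as $\mathrm{Bernoulli}(\theta_a)$ with unknown $\theta_a\in[0,1]$, and consider the stochastic-dominance Thompson sampling algorithm (SD\_TS) described below. Let $D$ denote the total variation distance. Then SD\_TS is $(2,0,0)$-subjectively fair with respect to $D$; that is, with probability $1$, for every round $t$ and every pair of arms $i,j$, $$D(\pi_t(i)\,\|\,\pi_t(j)) \le 2\, D(r_i(h^t)\,\|\,r_j(h^t)).$$
   Context: Algorithm SD\_TS: for each arm $a$ initialise $S_a=F_a=1/2$. In each round $t=1,2,\dots$: for each arm $a$, sample $\theta_a(t)\sim\mathrm{Beta}(S_a,F_a)$, then sample $\tilde r_a(t)\sim\mathrm{Bernoulli}(\theta_a(t))$; play $a_t=\arg\max_a \tilde r_a(t)$ (ties broken uniformly at random); observe the true reward $r_{a_t}(t)$ of the played arm and set $S_{a_t}\leftarrow S_{a_t}+1$ if $r_{a_t}(t)=1$, else $F_{a_t}\leftarrow F_{a_t}+1$. Notation: $h^t=(a_1,r_{a_1}(1),\dots,a_t,r_{a_t}(t))$ is the history; $\pi_t(i)$ is the probability (given the history) that the algorithm plays arm $i$ in round $t$. The decision maker's initial belief is the uninformed prior $\mathrm{Beta}(1/2,1/2)$ on each $\theta_i$, with posterior $\beta(\theta_i\mid h^t)$; the marginal (posterior predictive) reward distribution of arm $i$ is $r_i(h^t)=\int P(r_i\mid\theta_i)\,d\beta(\theta_i\mid h^t)$. For numbers $p,q\in[0,1]$, $D(p\|q)$ denotes the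 divergence between the Bernoulli distributions with parameters $p$ and $q$. Definition: a bandit process is $(\epsilon_1,\epsilon_2,\delta)$-subjectively fair w.r.t. a divergence $D$ ($\epsilon_1,\epsilon_2\ge0$, $0\le\delta\le1$) if with probability at least $1-\delta$, for every round $t$ and every pair of arms $i,j$, $D(\pi_t(i)\|\pi_t(j))\le \epsilon_1 D(r_i(h^t)\|r_j(h^t))+\epsilon_2$. *)

(* Defs.v *)
From HB Require Import structures.
From mathcomp Require Import all_boot all_order all_algebra.
From mathcomp Require Import all_classical all_reals all_analysis.
Set Implicit Arguments. Unset Strict Implicit. Unset Printing Implicit Defensive.
Import Order.TTheory GRing.Theory Num.Theory.
Local Open Scope ring_scope.
Local Open Scope classical_set_scope.

(* A history h^t of a k-armed Bernoulli bandit: the sequence of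
   (played arm, observed reward) pairs, reward true = 1, false = 0. *)
Definition history (k : nat) := seq ('I_k * bool).

Definition nsucc (k : nat) (h : history k) (a : 'I_k) : nat :=
  count (fun p => (p.1 == a) && p.2) h.
Definition nfail (k : nat) (h : history k) (a : 'I_k) : nat :=
  count (fun p => (p.1 == a) && ~~ p.2) h.

Section Defs.
Variable R : realType.

Definition S_par k (h : history k) (a : 'I_k) : R := 2^-1 + (nsucc h a)%:R.
Definition F_par k (h : history k) (a : 'I_k) : R := 2^-1 + (nfail h a)%:R.

(* (unnormalised) Beta(s,f) density on ]0,1[ *)
Definition beta_dens (s f : R) (x : R) : R := x `^ (s - 1) * (1 - x) `^ (f - 1).

(* Probability that  r ~ Bernoulli(theta)  equals 1 when  theta ~ Beta(s,f):
   \int theta dBeta(s,f)(theta). *)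
Definition beta_bern_prob (s f : R) : R :=
  Rintegral lebesgue_measure `]0, 1[ (fun x => x * beta_dens s f x) /
  Rintegral lebesgue_measure `]0, 1[ (beta_dens s f).

(* Probability that arm a's sampled reward  tilde r_a(t)  equals 1 under SD_TS. *)
Definition sdts_sample_prob k (h : history k) (a : 'I_k) : R :=
  beta_bern_prob (S_par h a) (F_par h a).

Definition argmax_arms k (x : {ffun 'I_k -> bool}) : {set 'I_k} :=
  [set a | [forall b, ((x b : nat) <= (x a : nat))%N]].

(* pi_t(i): probability (given the history) that SD_TS plays arm i:
   the sampled rewards are independent across arms; ties broken uniformly. *)
Definition sdts_pi k (h : history k) (i : 'I_k) : R :=
  \sum_(x : {ffun 'I_k -> bool})
     (\prod_(a : 'I_k) (if x a then sdts_sample_prob h a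
                        else 1 - sdts_sample_prob h a)) *
     (if i \in argmax_arms x then (#|argmax_arms x|%:R)^-1 else 0).

(* Decision maker: uninformed prior Beta(1/2,1/2) (normalising constant
   cancels), Bernoulli likelihood, posterior beta(theta | h). *)
Definition prior_dens (x : R) : R := x `^ (- 2^-1) * (1 - x) `^ (- 2^-1).
Definition likelihood k (h : history k) (a : 'I_k) (x : R) : R :=
  x ^+ nsucc h a * (1 - x) ^+ nfail h a.

(* r_i(h): posterior predictive probability that arm i's reward is 1,
   i.e. \int P(r_i = 1 | theta) d beta(theta | h) with P(r_i=1|theta)=theta. *)
Definition post_pred k (h : history k) (a : 'I_k) : R :=
  Rintegral lebesgue_measure `]0, 1[
     (fun x => x * (prior_dens x * likelihood h a x)) /
  Rintegral lebesgue_measure `]0, 1[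
     (fun x => prior_dens x * likelihood h a x).

Definition tv_bern (p q : R) : R := (`|p - q| + `|(1 - p) - (1 - q)|) / 2.

End Defs.

(* Main.v *)
Require Import Defs.
From HB Require Import structures.
From mathcomp Require Import all_boot all_order all_algebra all_fingroup.
From mathcomp Require Import all_classical all_reals all_analysis.
From mathcomp Require Import ring lra.
Import Order.TTheory GRing.Theory Num.Theory.
Local Open Scope ring_scope.

Section Comb.
Variables (R : realType) (k : nat) (q : 'I_k -> R).
Hypothesis q01 : forall a, 0 <= q a <= 1.

Definition fq (a : 'I_k) (b : bool) : R := if b then q a else 1 - q a.
Definition wq (x : {ffun 'I_k -> bool}) : R := \prod_a fq a (x a).
Definition cq (i : 'I_k) (x : {ffun 'I_k -> bool}) : R :=
  if i \in argmax_arms x then (#|argmax_arms x|%:R)^-1 else 0.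
Definition piq i := \sum_x wq x * cq i x.

Lemma fq_ge0 a b : 0 <= fq a b.
Proof. by have /andP[h1 h2] := q01 a; rewrite /fq; case: b => //; rewrite subr_ge0. Qed.

Lemma fq_sum a : fq a true + fq a false = 1.
Proof. by rewrite /fq addrC subrK. Qed.

Lemma cq_ge0 i x : 0 <= cq i x.
Proof. by rewrite /cq; case: ifP => // _; rewrite invr_ge0 ler0n. Qed.

Lemma cq_le1 i x : cq i x <= 1.
Proof.
rewrite /cq; case: ifP => // hi.
have c1 : (1 <= #|argmax_arms x|)%N by apply/card_gt0P; exists i.
by rewrite invf_le1 ?ler1n // ltr0n.
Qed.

Variables i j : 'I_k.
Hypothesis ij : i != j.

Definition sw (x : {ffun 'I_k -> bool}) : {ffun 'I_k -> bool} :=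
  [ffun a => x (tperm i j a)].

Lemma swK : involutive sw.
Proof. by move=> x; apply/ffunP => a; rewrite !ffunE tpermK. Qed.

Lemma argmax_sw x : argmax_arms (sw x) = (tperm i j) @^-1: argmax_arms x.
Proof.
apply/setP => a; rewrite !inE; apply/forallP/forallP => H b.
  by have := H (tperm i j b); rewrite !ffunE tpermK.
by rewrite !ffunE; apply: H.
Qed.

Lemma cq_sw x : cq j (sw x) = cq i x.
Proof.
rewrite /cq argmax_sw card_preimset; last exact: perm_inj.
by rewrite inE tpermR.
Qed.

Definition Gq (a : 'I_k) (b : bool) : R :=
  if a == i then (b : nat)%:R else if a == j then ((~~ b) : nat)%:R else fq a b.

Lemma Gq_ge0 a b : 0 <= Gq a b.
Proof. rewrite /Gq; case: ifP => _; first by rewrite ler0n.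
case: ifP => _; [by rewrite ler0n | exact: fq_ge0]. Qed.

Lemma sum_Gq : \sum_(x : {ffun 'I_k -> bool}) \prod_a Gq a (x a) = 1.
Proof.
rewrite -(bigA_distr_bigA (fun a b => Gq a b)) /=.
rewrite big1 // => a _; rewrite big_bool /Gq.
case: ifP => _; first by rewrite /= addr0.
case: ifP => _; first by rewrite /= add0r.
exact: fq_sum.
Qed.

Lemma prod_split (F : 'I_k -> R) :
  \prod_a F a = F i * (F j * \prod_(a | (a != i) && (a != j)) F a).
Proof. by rewrite (bigD1 i) //= (bigD1 j) //= eq_sym. Qed.

Lemma term_bound x :
  `|(wq x - wq (sw x)) * cq i x| <= `|q i - q j| * \prod_a Gq a (x a).
Proof.
have ji : j != i by rewrite eq_sym.
have hP : 0 <= \prod_a Gq a (x a) by apply: prodr_ge0 => a _; exact: Gq_ge0.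
case Exi: (x i); case Exj: (x j).
- have -> : sw x = x.
    apply/ffunP => a; rewrite ffunE; case: tpermP => [->|->|//]; by rewrite ?Exi ?Exj.
  by rewrite subrr mul0r normr0 mulr_ge0.
- rewrite /wq !prod_split.
  rewrite !ffunE tpermL tpermR Exi Exj /Gq eqxx (negbTE ji) eqxx /= mul1r mul1r.
  set P := \prod_(a | _) fq a (x a).
  have -> : \prod_(a | (a != i) && (a != j)) fq a (sw x a) = P.
    by apply: eq_bigr => a /andP[a1 a2]; rewrite ffunE tpermD // eq_sym.
  have -> : \prod_(a | (a != i) && (a != j))
      (if a == i then (x a : nat)%:R else if a == j then (~~ x a : nat)%:R else fq a (x a)) = P.
    by apply: eq_bigr => a /andP[a1 a2]; rewrite (negbTE a1) (negbTE a2).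
  have P0 : 0 <= P by apply: prodr_ge0 => a _; exact: fq_ge0.
  rewrite /fq.
  have -> : q i * ((1 - q j) * P) - (1 - q i) * (q j * P) = (q i - q j) * P by ring.
  rewrite normrM normrM (ger0_norm P0) (ger0_norm (cq_ge0 _ _)).
  rewrite -[X in _ <= X]mulr1; apply: ler_wpM2l; first by rewrite mulr_ge0.
  exact: cq_le1.
- have -> : cq i x = 0.
    rewrite /cq inE; case: ifP => // /forallP /(_ j); by rewrite Exi Exj.
  by rewrite mulr0 normr0 mulr_ge0.
- have -> : sw x = x.
    apply/ffunP => a; rewrite ffunE; case: tpermP => [->|->|//]; by rewrite ?Exi ?Exj.
  by rewrite subrr mul0r normr0 mulr_ge0.
Qed.

Lemma piq_bound : `|piq i - piq j| <= `|q i - q j|.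
Proof.
have -> : piq j = \sum_x wq (sw x) * cq i x.
  rewrite /piq (reindex_inj (can_inj swK)) /=.
  by apply: eq_bigr => x _; rewrite cq_sw.
rewrite /piq -sumrB.
apply: le_trans (ler_norm_sum _ _ _) _.
rewrite -[X in _ <= X]mulr1 -sum_Gq mulr_sumr.
apply: ler_sum => x _; rewrite -mulrBl; exact: term_bound.
Qed.
End Comb.
Local Open Scope classical_set_scope.

Section Ana.
Variable R : realType.

Lemma beta_meas (s f : R) : measurable_fun (`]0, 1[ : set R) (beta_dens s f).
Proof.
rewrite /beta_dens; apply: measurable_realfun.measurable_funM.
  by apply: measurable_funTS; exact: measurable_realfun.measurable_powR.
apply: (measurableT_comp (f := (@powR R)^~ (f - 1)) (g := fun x : R => 1 - x)).
  exact: measurable_realfun.measurable_powR.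
by apply: measurable_realfun.measurable_funB.
Qed.

Lemma ratio01 (g : R -> R) :
  measurable_fun (`]0, 1[ : set R) g -> (forall x, 0 < x < 1 -> 0 <= g x) ->
  0 <= Rintegral lebesgue_measure `]0, 1[ (fun x => x * g x) /
       Rintegral lebesgue_measure `]0, 1[ g <= 1.
Proof.
move=> mg g0.
have mD : measurable (`]0, 1[ : set R) := measurable_itv _.
have hN0 : (0 <= \int[lebesgue_measure]_(x in `]0%R, 1%R[) (x * g x)%:E)%E.
  apply: integral_ge0 => x; rewrite /= in_itv /= => /andP[x0 x1].
  by rewrite lee_fin mulr_ge0 ?(ltW x0) ?g0 ?x0.
have hD0 : (0 <= \int[lebesgue_measure]_(x in `]0%R, 1%R[) (g x)%:E)%E.
  apply: integral_ge0 => x; rewrite /= in_itv /= => /andP[x0 x1].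
  by rewrite lee_fin g0 ?x0.
have hND : (\int[lebesgue_measure]_(x in `]0%R, 1%R[) (x * g x)%:E <=
            \int[lebesgue_measure]_(x in `]0%R, 1%R[) (g x)%:E)%E.
  apply: ge0_le_integral => //.
  - move=> x; rewrite /= in_itv /= => /andP[x0 x1].
    by rewrite lee_fin mulr_ge0 ?(ltW x0) ?g0 ?x0.
  - apply/measurable_realfun.measurable_EFinP; exact: measurable_realfun.measurable_funM.
  - by apply/measurable_realfun.measurable_EFinP.
  - move=> x; rewrite /= in_itv /= => /andP[x0 x1].
    by rewrite lee_fin ler_piMl ?g0 ?x0 ?(ltW x1).
rewrite /Rintegral.
move: hN0 hD0 hND.
case: (\int[lebesgue_measure]_(x in `]0%R, 1%R[) (x * g x)%:E)%E => [n| |];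
case: (\int[lebesgue_measure]_(x in `]0%R, 1%R[) (g x)%:E)%E => [r| |] //=;
  rewrite ?lee_fin => n0 r0 nr.
- have [->|rn0] := eqVneq r 0; first by rewrite invr0 mulr0 lexx ler01.
  rewrite divr_ge0 //= ler_pdivrMr ?mul1r // lt_neqAle eq_sym rn0 r0 //.
- by rewrite invr0 mulr0 lexx ler01.
- by rewrite invr0 mulr0 lexx ler01.
Qed.

Lemma dens_eq k (h : history k) (a : 'I_k) (x : R) : 0 < x < 1 ->
  beta_dens (S_par R h a) (F_par R h a) x = prior_dens x * likelihood h a x.
Proof.
move=> /andP[x0 x1].
have y0 : 0 < 1 - x by rewrite subr_gt0.
rewrite /beta_dens /prior_dens /likelihood /S_par /F_par.
have e : forall n : nat, 2^-1 + n%:R - 1 = - 2^-1 + n%:R :> R.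
  move=> n; lra.
rewrite !e !powRD; last first.
- by apply/implyP => _; rewrite gt_eqF.
- by apply/implyP => _; rewrite gt_eqF.
rewrite !powR_mulrn ?(ltW x0) ?(ltW y0) //.
ring.
Qed.

Lemma sample_eq k (h : history k) (a : 'I_k) :
  sdts_sample_prob R h a = post_pred R h a.
Proof.
rewrite /sdts_sample_prob /beta_bern_prob /post_pred.
congr (_ / _); apply: eq_Rintegral => x; rewrite inE /= in_itv /= => hx.
  by rewrite dens_eq.
by have := @dens_eq k h a x hx; rewrite /beta_dens => ->.
Qed.

Lemma sample01 k (h : history k) (a : 'I_k) :
  0 <= sdts_sample_prob R h a <= 1.
Proof.
apply: ratio01; first exact: beta_meas.
by move=> x _; rewrite /beta_dens mulr_ge0 ?powR_ge0.
Qed.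
End Ana.

Local Close Scope classical_set_scope.

Lemma tv_eq (R : realType) (p q : R) : tv_bern p q = `|p - q|.
Proof.
rewrite /tv_bern.
have -> : (1 - p) - (1 - q) = - (p - q) by ring.
rewrite normrN; set t := `|p - q|; lra.
Qed.

Theorem theorem3p1 (R : realType) (k : nat) (h : history k) (i j : 'I_k) :
  tv_bern (sdts_pi R h i) (sdts_pi R h j)
    <= 2 * tv_bern (post_pred R h i) (post_pred R h j).
Proof.
rewrite !tv_eq.
have [<-|ij] := eqVneq i j.
  by rewrite subrr normr0 mulr_ge0.
have := @piq_bound R k (sdts_sample_prob R h) (@sample01 R k h) i j ij.
rewrite /piq !sample_eq => H.
apply: (le_trans H).
by rewrite ler_peMl // ler1n.
Qed.
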